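(* In the pool-based active learning setting, the utility function $f(S,\phi)=1-p_H(\mathcal{H}(\phi|_S))$ is worst-case submodular with respect to the induced prior $p(\phi)$; that is, for all partial realizations $\psi\subseteq\psi'$ (with positive probability) and every $e\in E\setminus\mathrm{dom}(\psi')$, $f_{wc}(e\mid\psi)\ge f_{wc}(e\mid\psi')$.
   Context: Pool-based active learning setting: $E$ is a finite set of data points and $O$ a finite set of labels. $\mathcal{H}$ is a finite set of hypotheses, each $h\in\mathcal{H}$ a function $h:E\to O$, with a prior probability distribution $p_H$ on $\mathcal{H}$; $p_H(\mathcal{H}')=\sum_{h\in\mathcal{H}'}p_H(h)$. Realizations are functions $\phi:E\to O$ with prior $p(\phi)=p_H(\{h\in\mathcal{H}:h=\phi\})$; $\Phi\sim p$. A partial realization is $\psi:S\to O$ with $\mathrm{dom}(\psi)=S\subseteq E$, identified with its set of pairs; $\psi\subseteq\psi'$ means $\psi'$ extends $\psi$; $\phi\sim\psi$ (or $h\sim\psi$) means agreement on $\mathrm{dom}(\psi)$; only $\psi$ with $\Pr[\Phi\sim\psi]>0$ are considered, and $p(\phi\mid\psi)=\Pr[\Phi=\phi\mid\Phi\sim\psi]$. The version space is $\mathcal{H}(\psi)=\{h\in\mathcal{H}:h\sim\psi\}$, and $\phi|_S$ denotes the restriction of $\phi$ to $S$. For $S\subseteq E$ and partial realization $\psi$, $f(S,\psi)=\mathbb{E}[f(S,\Phi)\mid\Phi\sim\psi]$. For $e\notin\mathrm{dom}(\psi)$, $O(e,\psi)=\{o\in O:\exists\phi,\ p(\phi\mid\psi)>0,\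 \phi(e)=o\}$ and $f_{wc}(e\mid\psi)=\min_{o\in O(e,\psi)}\{f(\mathrm{dom}(\psi)\cup\{e\},\psi\cup\{(e,o)\})-f(\mathrm{dom}(\psi),\psi)\}$. $f$ is worst-case submodular if $f_{wc}(e\mid\psi)\ge f_{wc}(e\mid\psi')$ for all $\psi\subseteq\psi'$ and all $e\in E\setminus\mathrm{dom}(\psi')$. *)

(* Defs.v *)
From mathcomp Require Import all_boot all_order all_algebra.
Set Implicit Arguments. Unset Strict Implicit. Unset Printing Implicit Defensive.
Import Order.TTheory GRing.Theory Num.Theory.
Local Open Scope ring_scope.

Section ActiveLearning.
Variables (R : realFieldType) (E O : finType).
Notation realization := {ffun E -> O}.
(* a partial realization psi : dom(psi) -> O, encoded as an option-valued map;
   dom(psi) = the points where it is not None *)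
Notation partial := {ffun E -> option O}.
Variables (H : {set realization}) (pH : realization -> R).

Definition pH_of (Hs : {set realization}) : R := \sum_(h in Hs) pH h.

Definition prior (phi : realization) : R := pH_of [set h in H | h == phi].

Definition dom (psi : partial) : {set E} := [set e | psi e != None].

Definition consistent (phi : realization) (psi : partial) : bool :=
  [forall e, (psi e == None) || (psi e == Some (phi e))].

Definition subreal (psi psi' : partial) : Prop :=
  forall e, psi e != None -> psi' e = psi e.

Definition prob_cons (psi : partial) : R :=
  \sum_(phi | consistent phi psi) prior phi.

Definition cond_prior (phi : realization) (psi : partial) : R :=
  (if consistent phi psi then prior phi else 0) / prob_cons psi.

Definition version_space (psi : partial) : {set realization} :=
  [set h in H | consistent h psi].

Definition restrict (phi : realization) (S : {set E}) : partial :=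
  [ffun e => if e \in S then Some (phi e) else None].

Definition util (S : {set E}) (phi : realization) : R :=
  1 - pH_of (version_space (restrict phi S)).

Definition util_exp (S : {set E}) (psi : partial) : R :=
  \sum_phi cond_prior phi psi * util S phi.

Definition outcomes (e : E) (psi : partial) : {set O} :=
  [set o | [exists phi, (0 < cond_prior phi psi) && (phi e == o)]].

Definition extend (psi : partial) (e : E) (o : O) : partial :=
  [ffun x => if x == e then Some o else psi x].

Definition gain (e : E) (psi : partial) (o : O) : R :=
  util_exp (dom (extend psi e o)) (extend psi e o) - util_exp (dom psi) psi.

(* f_wc(e | psi) = min_{o in O(e,psi)} gain; the seed of the min is an element
   of O(e,psi) itself (the value 0 for empty O(e,psi) is never used under the
   positivity hypothesis). *)
Definition fwc (e : E) (psi : partial) : R :=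
  if [pick o in outcomes e psi] is Some o0 then
    \big[Num.min/gain e psi o0]_(o in outcomes e psi) gain e psi o
  else 0.

End ActiveLearning.

(* Main.v *)
Require Import Defs.
From mathcomp Require Import all_boot all_order all_algebra.
From mathcomp Require Import ring.
Import Order.TTheory GRing.Theory Num.Theory.
Local Open Scope ring_scope.

Section Proof.
Variables (R : realFieldType) (E O : finType).
Variables (H : {set {ffun E -> O}}) (pH : {ffun E -> O} -> R).
Implicit Types (psi : {ffun E -> option O}) (phi : {ffun E -> O}) (e : E) (o : O).
Hypothesis pH_ge0 : forall h, h \in H -> 0 <= pH h.

Definition G (psi : {ffun E -> option O}) : R :=
  \sum_(h in H) (if consistent h psi then pH h else 0).

Definition g (e : E) (psi : {ffun E -> option O}) (o : O) : R :=
  \sum_(h in H) (if consistent h psi && (h e != o) then pH h else 0).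

Lemma priorE phi : prior H pH phi = if phi \in H then pH phi else 0.
Proof.
rewrite /prior /pH_of.
have -> : [set h in H | h == phi] = if phi \in H then [set phi] else set0.
  apply/setP => h; case: ifP => Hphi; rewrite !inE;
   case: (eqVneq h phi) => [->|]; rewrite ?Hphi ?andbF ?andbT //.
case: ifP => _; [by rewrite big_set1 | by rewrite big_set0].
Qed.

Lemma prob_consE psi : prob_cons H pH psi = G psi.
Proof.
rewrite /prob_cons /G big_mkcond [RHS]big_mkcond /=.
apply: eq_bigr => phi _; rewrite priorE; by case: (phi \in H); case: consistent.
Qed.

Lemma pH_ofE psi : pH_of pH (version_space H psi) = G psi.
Proof.
rewrite /pH_of /version_space /G big_mkcond [RHS]big_mkcond /=.
apply: eq_bigr => phi _; rewrite inE; by case: (phi \in H); case: consistent.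
Qed.

Lemma restrictE (phi : {ffun E -> O}) (psi : {ffun E -> option O}) : consistent phi psi -> restrict phi (dom psi) = psi.
Proof.
move/forallP => C; apply/ffunP => x; rewrite ffunE inE.
by case/orP: (C x) => /eqP ->.
Qed.

Lemma util_expE psi : 0 < prob_cons H pH psi ->
  util_exp H pH (dom psi) psi = 1 - G psi.
Proof.
move=> P0.
rewrite /util_exp.
have -> : \sum_phi cond_prior H pH phi psi * util H pH (dom psi) phi =
          \sum_phi cond_prior H pH phi psi * (1 - G psi).
  apply: eq_bigr => phi _; rewrite /cond_prior.
  case C: (consistent phi psi); last by rewrite !mul0r.
  by rewrite /util restrictE // pH_ofE.
rewrite -mulr_suml /cond_prior -mulr_suml.
rewrite -big_mkcond /= -/(prob_cons H pH psi) divff ?mul1r //.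
by rewrite gt_eqF.
Qed.

Lemma cons_ext h psi e o : psi e = None ->
  consistent h (extend psi e o) = consistent h psi && (h e == o).
Proof.
move=> Pe; apply/forallP/andP.
- move=> C; split.
  + apply/forallP => x; have := C x; rewrite ffunE.
    case: (eqVneq x e) => [->|//]; by rewrite Pe.
  + by have := C e; rewrite ffunE eqxx /= => /eqP [->].
- case=> /forallP C /eqP <- x; rewrite ffunE.
  by case: (eqVneq x e) => [->|_]; [rewrite eqxx orbT | exact: C].
Qed.

Lemma cond_pos phi psi : 0 < prob_cons H pH psi -> 0 < cond_prior H pH phi psi ->
  [/\ consistent phi psi, phi \in H & 0 < pH phi].
Proof.
move=> P0; rewrite /cond_prior.
case C: (consistent phi psi); last by rewrite mul0r ltxx.
rewrite priorE; case: ifP => HH; last by rewrite mul0r ltxx.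
by rewrite pmulr_lgt0 ?invr_gt0.
Qed.

Lemma G_ge phi psi : phi \in H -> consistent phi psi -> pH phi <= G psi.
Proof.
move=> HH C; rewrite /G (bigD1 phi) //= C lerDl.
by apply: sumr_ge0 => h /andP [Hh _]; case: ifP => // _; exact: pH_ge0.
Qed.

Lemma gainE psi e o : 0 < prob_cons H pH psi -> psi e = None ->
  o \in outcomes H pH e psi -> gain H pH e psi o = g e psi o.
Proof.
move=> P0 Pe; rewrite inE => /existsP [phi /andP [cp /eqP phio]].
have [C HH pp] := cond_pos _ _ P0 cp.
have P1 : 0 < prob_cons H pH (extend psi e o).
  rewrite prob_consE; apply: lt_le_trans pp _; apply: G_ge => //.
  by rewrite cons_ext // C phio eqxx.
rewrite /gain !util_expE //.
have -> : 1 - G (extend psi e o) - (1 - G psi) = G psi - G (extend psi e o) by ring.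
rewrite /G /g -sumrB.
apply: eq_bigr => h _; rewrite cons_ext //.
by case: consistent; case: (h e == o); rewrite /= ?subrr ?subr0.
Qed.

Lemma outcomes_ne psi e : 0 < prob_cons H pH psi ->
  exists o, o \in outcomes H pH e psi.
Proof.
move=> P0.
have : [exists phi, consistent phi psi && (0 < prior H pH phi)].
  case: (boolP [exists _, _]) => // ; rewrite negb_exists => /forallP N.
  move: P0; rewrite /prob_cons big1 ?ltxx // => phi C.
  have := N phi; rewrite C /= -leNgt => le0.
  by apply/eqP; rewrite eq_le le0 /= priorE; case: ifP => // /pH_ge0.
case/existsP => phi /andP [C pp].
exists (phi e); rewrite inE; apply/existsP; exists phi; rewrite eqxx andbT.
by rewrite /cond_prior C divr_gt0.
Qed.

Lemma fwc_le psi e o : 0 < prob_cons H pH psi -> o \in outcomes H pH e psi ->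
  fwc H pH e psi <= gain H pH e psi o.
Proof.
move=> P0 Ho; rewrite /fwc; case: pickP => [o0 Ho0|/(_ o)]; last by rewrite Ho.
by rewrite (bigD1 o) //= ge_min lexx.
Qed.

Lemma fwc_eq psi e : 0 < prob_cons H pH psi ->
  exists2 o, o \in outcomes H pH e psi & fwc H pH e psi = gain H pH e psi o.
Proof.
move=> P0; rewrite /fwc; case: pickP => [o0 Ho0|N].
  apply: (big_ind (fun x => exists2 o, o \in outcomes H pH e psi & x = gain H pH e psi o)).
  - by exists o0.
  - move=> x y [ox Hx ->] [oy Hy ->]; case: (leP (gain H pH e psi ox) (gain H pH e psi oy)) => _.
    + by exists ox.
    + by exists oy.
  - by move=> o Ho; exists o.
have [o Ho] := outcomes_ne _ e P0.
by move: (N o); rewrite Ho.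
Qed.

End Proof.

Theorem proposition1 (R : realFieldType) (E O : finType)
  (H : {set {ffun E -> O}}) (pH : {ffun E -> O} -> R) :
  (forall h, h \in H -> 0 <= pH h) ->
  \sum_(h in H) pH h = 1 ->
  forall (psi psi' : {ffun E -> option O}) (e : E),
    0 < prob_cons H pH psi ->
    0 < prob_cons H pH psi' ->
    subreal psi psi' ->
    e \notin dom psi' ->
    fwc H pH e psi' <= fwc H pH e psi.
Proof.
move=> pH0 _ psi psi' e P0 P1 sub He.
have Pe' : psi' e = None by move: He; rewrite inE negbK => /eqP.
have Pe : psi e = None.
  by apply/eqP; apply/negP => /negP N; move: (sub e N); rewrite Pe' => Ne; rewrite -Ne in N.
have cons_sub h : consistent h psi' -> consistent h psi.
  move=> /forallP C; apply/forallP => x.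
  case: (eqVneq (psi x) None) => [->//|N]. by move: (C x); rewrite (sub x N) (negbTE N).
have gmono o : @g _ _ _ H pH e psi' o <= @g _ _ _ H pH e psi o.
  apply: ler_sum => h Hh.
  case C: (consistent h psi'); rewrite /=.
    by rewrite cons_sub.
  by case: ifP => // _; exact: pH0.
have [os Hos ->] := @fwc_eq _ _ _ H pH pH0 _ e P0.
rewrite (@gainE _ _ _ H pH pH0 _ _ _ P0 Pe Hos).
case Hos': (os \in outcomes H pH e psi').
  apply: le_trans (gmono os).
  rewrite -(@gainE _ _ _ H pH pH0 _ _ _ P1 Pe' Hos').
  exact: (@fwc_le _ _ _ H pH _ _ _ P1 Hos').
have [o' Ho'] := @outcomes_ne _ _ _ H pH pH0 _ e P1.
apply: le_trans (@fwc_le _ _ _ H pH _ _ _ P1 Ho') _.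
rewrite (@gainE _ _ _ H pH pH0 _ _ _ P1 Pe' Ho').
apply: le_trans _ (gmono os).
apply: ler_sum => h Hh.
case C: (consistent h psi') => /=; last by rewrite lexx.
case: (eqVneq (h e) os) => [hos|_]; last first.
  by case: ifP => _; [exact: lexx | exact: pH0].
case: ifP => _ //.
rewrite le_eqVlt; apply/orP; left; apply/eqP.
apply/eqP; rewrite eq_le pH0 // andbT leNgt; apply/negP => pp.
move/negbT: Hos'; rewrite inE => /existsP; apply; exists h; rewrite hos eqxx andbT.
by rewrite /cond_prior C priorE Hh divr_gt0.
Qed.
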